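(* Let $Q=ABCD$ be a non-degenerate convex quadrangle of perimeter $2$ and $Q^\circ=KLMN$ its dual. Then $|AC|=|KM|$ and $|BD|=|LN|$; that is, duality preserves the lengths of the corresponding diagonals.
   Context: Identify $\mathbb{R}^2$ with $\mathbb{C}$. A quadrangle $Q=ABCD$ is an ordered 4-tuple of points $A,B,C,D\in\mathbb{C}$: $A$ is the first vertex and the order $A\to B\to C\to D\to A$ is the direction of traversal. Its edge vectors are $z_1=B-A$, $z_2=C-B$, $z_3=D-C$, $z_4=A-D$, so $z_1+z_2+z_3+z_4=0$; its perimeter is $|z_1|+|z_2|+|z_3|+|z_4|$. $Q$ is non-degenerate if each pair of consecutive edge vectors $(z_1,z_2),(z_2,z_3),(z_3,z_4),(z_4,z_1)$ consists of nonzero, non-collinear vectors. A non-degenerate quadrangle is convex if no two opposite edges intersect and all its interior angles are less than $\pi$. Associated plane: for a non-degenerate $Q$ of perimeter $2$, choose $u_1,\dots,u_4\in\mathbb{C}$ with $u_k^2=z_k$, where $u_1$ is an arbitrary square root of $z_1$ and for $k=1,2,3$ the sign of $u_{k+1}$ is chosen so that $\operatorname{Im}(\overline{u_k}u_{k+1})$ has the same sign as $\operatorname{Im}(\overline{z_k}z_{k+1})$. Write $u_k=a_k+i b_k$ and $\bar a=(a_1,a_2,a_3,a_4)$, $\bar b=(b_1,b_2,b_3,b_4)$; these are orthonormal in $\mathbb{R}^4$. Let $\Pi=\operatorname{span}(\bar a,\bar b)$ and $\Pi^\perp$ its orthogonal complement. Dual quadrangle: choose an orthonormal basis $(\bar c,\bar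 d)$ of $\Pi^\perp$, put $w_k=(c_k+i d_k)^2$; then $\sum_k w_k=0$ and $\sum_k|w_k|=2$. The dual quadrangle $Q^\circ=KLMN$ is the quadrangle with $L-K=w_1$, $M-L=w_2$, $N-M=w_3$, $K-N=w_4$. It is determined up to rotation, reflection and translation. *)

(* Defs.v *)
(* classical reals. C is identified with R*R. *)
From Stdlib Require Import Reals.
Open Scope R_scope.

Definition pt := (R * R)%type.

Definition psub (p q : pt) : pt := (fst p - fst q, snd p - snd q).

Definition cross (p q : pt) : R := fst p * snd q - snd p * fst q.

Definition cnorm (p : pt) : R := sqrt (fst p ^ 2 + snd p ^ 2).

Definition pdist (p q : pt) : R := cnorm (psub p q).

(* complex square: (a + i b)^2 *)
Definition csq (u : pt) : pt := (fst u ^ 2 - snd u ^ 2, 2 * fst u * snd u).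

Definition z1 (A B C D : pt) : pt := psub B A.
Definition z2 (A B C D : pt) : pt := psub C B.
Definition z3 (A B C D : pt) : pt := psub D C.
Definition z4 (A B C D : pt) : pt := psub A D.

Definition perimeter (A B C D : pt) : R :=
  cnorm (z1 A B C D) + cnorm (z2 A B C D) + cnorm (z3 A B C D) + cnorm (z4 A B C D).

Definition good_pair (p q : pt) : Prop :=
  p <> (0, 0) /\ q <> (0, 0) /\ cross p q <> 0.

Definition nondegenerate (A B C D : pt) : Prop :=
  good_pair (z1 A B C D) (z2 A B C D) /\ good_pair (z2 A B C D) (z3 A B C D) /\
  good_pair (z3 A B C D) (z4 A B C D) /\ good_pair (z4 A B C D) (z1 A B C D).

Definition segments_meet (P Q R0 S : pt) : Prop :=
  exists t s : R, 0 <= t <= 1 /\ 0 <= s <= 1 /\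
    fst P + t * (fst Q - fst P) = fst R0 + s * (fst S - fst R0) /\
    snd P + t * (snd Q - snd P) = snd R0 + s * (snd S - snd R0).

(* signed area (shoelace); its sign is the orientation of the traversal *)
Definition signed_area (A B C D : pt) : R :=
  (cross A B + cross B C + cross C D + cross D A) / 2.

(* For a simple polygon, the interior angle at a vertex is < pi iff the turn
   there is in the direction of the orientation of the polygon. *)
Definition interior_angles_lt_pi (A B C D : pt) : Prop :=
  let S := signed_area A B C D in
  cross (z4 A B C D) (z1 A B C D) * S > 0 /\
  cross (z1 A B C D) (z2 A B C D) * S > 0 /\
  cross (z2 A B C D) (z3 A B C D) * S > 0 /\
  cross (z3 A B C D) (z4 A B C D) * S > 0.

Definition convex (A B C D : pt) : Prop :=
  nondegenerate A B C D /\
  ~ segments_meet A B C D /\ ~ segments_meet B C D A /\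
  interior_angles_lt_pi A B C D.

Definition assoc_roots (A B C D u1 u2 u3 u4 : pt) : Prop :=
  csq u1 = z1 A B C D /\ csq u2 = z2 A B C D /\
  csq u3 = z3 A B C D /\ csq u4 = z4 A B C D /\
  cross u1 u2 * cross (z1 A B C D) (z2 A B C D) > 0 /\
  cross u2 u3 * cross (z2 A B C D) (z3 A B C D) > 0 /\
  cross u3 u4 * cross (z3 A B C D) (z4 A B C D) > 0.

Definition dot4 (f g : pt -> R) (p1 p2 p3 p4 q1 q2 q3 q4 : pt) : R :=
  f p1 * g q1 + f p2 * g q2 + f p3 * g q3 + f p4 * g q4.

(* v_k = (c_k, d_k): (c, d) orthonormal basis of the orthogonal complement of
   span(a, b), where u_k = (a_k, b_k).  *)
Definition perp_basis (u1 u2 u3 u4 v1 v2 v3 v4 : pt) : Prop :=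
  dot4 fst fst v1 v2 v3 v4 v1 v2 v3 v4 = 1 /\
  dot4 snd snd v1 v2 v3 v4 v1 v2 v3 v4 = 1 /\
  dot4 fst snd v1 v2 v3 v4 v1 v2 v3 v4 = 0 /\
  dot4 fst fst u1 u2 u3 u4 v1 v2 v3 v4 = 0 /\
  dot4 fst snd u1 u2 u3 u4 v1 v2 v3 v4 = 0 /\
  dot4 snd fst u1 u2 u3 u4 v1 v2 v3 v4 = 0 /\
  dot4 snd snd u1 u2 u3 u4 v1 v2 v3 v4 = 0.

Definition dual_quadrangle (A B C D K L M N : pt) : Prop :=
  exists u1 u2 u3 u4 v1 v2 v3 v4 : pt,
    assoc_roots A B C D u1 u2 u3 u4 /\
    perp_basis u1 u2 u3 u4 v1 v2 v3 v4 /\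
    psub L K = csq v1 /\ psub M L = csq v2 /\
    psub N M = csq v3 /\ psub K N = csq v4.

(* Main.v *)
Require Import Defs.
From Stdlib Require Import Reals Lra.
Open Scope R_scope.

Lemma sqrt_csq (a b : R) : sqrt ((a^2 - b^2)^2 + (2*a*b)^2) = a^2 + b^2.
Proof.
  replace ((a^2 - b^2)^2 + (2*a*b)^2) with ((a^2+b^2)^2) by ring.
  apply sqrt_pow2. nra.
Qed.

Lemma sqrt_csq' (a b : R) : sqrt ((a*(a*1) - b*(b*1))^2 + (2*a*b)^2) = a^2 + b^2.
Proof. exact (sqrt_csq a b). Qed.

Lemma key (a1 b1 a2 b2 c1 d1 c2 d2 : R) :
  a1*a1+b1*b1+c1*c1+d1*d1 = 1 ->
  a2*a2+b2*b2+c2*c2+d2*d2 = 1 ->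
  a1*a2+b1*b2+c1*c2+d1*d2 = 0 ->
  ((a1^2-b1^2) + (a2^2-b2^2))^2 + ((2*a1*b1) + (2*a2*b2))^2 =
  ((c1^2-d1^2) + (c2^2-d2^2))^2 + ((2*c1*d1) + (2*c2*d2))^2.
Proof.
  intros h1 h2 h3.
  set (s1 := a1*a1+b1*b1). set (s2 := a2*a2+b2*b2). set (p := a1*a2+b1*b2).
  replace (((a1^2-b1^2) + (a2^2-b2^2))^2 + ((2*a1*b1) + (2*a2*b2))^2)
    with ((s1-s2)^2 + 4*p^2) by (unfold s1, s2, p; ring).
  replace (((c1^2-d1^2) + (c2^2-d2^2))^2 + ((2*c1*d1) + (2*c2*d2))^2)
    with (((c1*c1+d1*d1)-(c2*c2+d2*d2))^2 + 4*(c1*c2+d1*d2)^2) by ring.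
  replace (c1*c1+d1*d1) with (1 - s1) by (unfold s1; lra).
  replace (c2*c2+d2*d2) with (1 - s2) by (unfold s2; lra).
  replace (c1*c2+d1*d2) with (- p) by (unfold p; lra).
  ring.
Qed.
Lemma colfacts (xA yA xB yB xC yC xD yD a1 a2 a3 a4 b1 b2 b3 b4 : R) :
  a1^2-b1^2 = xB - xA -> 2*a1*b1 = yB - yA ->
  a2^2-b2^2 = xC - xB -> 2*a2*b2 = yC - yB ->
  a3^2-b3^2 = xD - xC -> 2*a3*b3 = yD - yC ->
  a4^2-b4^2 = xA - xD -> 2*a4*b4 = yA - yD ->
  (a1^2+b1^2) + (a2^2+b2^2) + (a3^2+b3^2) + (a4^2+b4^2) = 2 ->
  a1*a1+a2*a2+a3*a3+a4*a4 = 1 /\ b1*b1+b2*b2+b3*b3+b4*b4 = 1 /\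
  a1*b1+a2*b2+a3*b3+a4*b4 = 0.
Proof.
  intros. assert (E: (a1^2-b1^2)+(a2^2-b2^2)+(a3^2-b3^2)+(a4^2-b4^2) = 0) by lra.
  assert (F: 2*a1*b1+2*a2*b2+2*a3*b3+2*a4*b4 = 0) by lra.
  repeat split; nra.
Qed.

Lemma sqrt_eq_diag (a1 b1 a2 b2 c1 d1 c2 d2 x1 y1 x2 y2 x3 y3 X1 Y1 X2 Y2 X3 Y3 : R) :
  a1*a1+b1*b1+c1*c1+d1*d1 = 1 ->
  a2*a2+b2*b2+c2*c2+d2*d2 = 1 ->
  a1*a2+b1*b2+c1*c2+d1*d2 = 0 ->
  a1^2-b1^2 = x2 - x1 -> 2*a1*b1 = y2 - y1 ->
  a2^2-b2^2 = x3 - x2 -> 2*a2*b2 = y3 - y2 ->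
  X2 - X1 = c1^2-d1^2 -> Y2 - Y1 = 2*c1*d1 ->
  X3 - X2 = c2^2-d2^2 -> Y3 - Y2 = 2*c2*d2 ->
  sqrt ((x1 - x3)^2 + (y1 - y3)^2) = sqrt ((X1 - X3)^2 + (Y1 - Y3)^2).
Proof.
  intros h1 h2 h3 e1 e2 e3 e4 f1 f2 f3 f4. f_equal.
  replace ((x1 - x3)^2 + (y1 - y3)^2) with
    (((a1^2-b1^2) + (a2^2-b2^2))^2 + ((2*a1*b1) + (2*a2*b2))^2).
  2:{ rewrite e1, e2, e3, e4. ring. }
  replace ((X1 - X3)^2 + (Y1 - Y3)^2) with
    (((c1^2-d1^2) + (c2^2-d2^2))^2 + ((2*c1*d1) + (2*c2*d2))^2).
  2:{ rewrite <- f1, <- f2, <- f3, <- f4. ring. }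
  apply key; assumption.
Qed.

From mathcomp Require Import all_boot all_algebra.
From mathcomp Require Import ring.
From mathcomp Require Import Rstruct.
Import GRing.Theory.
Local Open Scope ring_scope.

Lemma rows_orth (F : fieldType) (a1 a2 a3 a4 b1 b2 b3 b4 c1 c2 c3 c4 d1 d2 d3 d4 : F) :
  a1*a1+a2*a2+a3*a3+a4*a4 = 1 ->
  b1*b1+b2*b2+b3*b3+b4*b4 = 1 ->
  c1*c1+c2*c2+c3*c3+c4*c4 = 1 ->
  d1*d1+d2*d2+d3*d3+d4*d4 = 1 ->
  a1*b1+a2*b2+a3*b3+a4*b4 = 0 ->
  a1*c1+a2*c2+a3*c3+a4*c4 = 0 ->
  a1*d1+a2*d2+a3*d3+a4*d4 = 0 ->
  b1*c1+b2*c2+b3*c3+b4*c4 = 0 ->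
  b1*d1+b2*d2+b3*d3+b4*d4 = 0 ->
  c1*d1+c2*d2+c3*d3+c4*d4 = 0 ->
  [/\ a1*a1+b1*b1+c1*c1+d1*d1 = 1,
      a2*a2+b2*b2+c2*c2+d2*d2 = 1,
      a3*a3+b3*b3+c3*c3+d3*d3 = 1,
      a1*a2+b1*b2+c1*c2+d1*d2 = 0 &
      a2*a3+b2*b3+c2*c3+d2*d3 = 0].
Proof.
move=> haa hbb hcc hdd hab hac had hbc hbd hcd.
pose rows : seq (seq F) := [:: [:: a1; b1; c1; d1]; [:: a2; b2; c2; d2];
                              [:: a3; b3; c3; d3]; [:: a4; b4; c4; d4]].
pose O : 'M[F]_4 := \matrix_(i < 4, j < 4) nth 0 (nth [::] rows i) j.
have H : O^T *m O = 1%:M.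
  apply/matrixP => i j; rewrite !mxE.
  rewrite !big_ord_recr big_ord0 /= !mxE /=.
  case: i => [[|[|[|[|i]]]] Hi] //; case: j => [[|[|[|[|j]]]] Hj] //=;
  rewrite /= ?add0r; (try by []); idtac;
  first [ apply: (etrans _ haa); ring | apply: (etrans _ hbb); ring
        | apply: (etrans _ hcc); ring | apply: (etrans _ hdd); ring
        | apply: (etrans _ hab); ring | apply: (etrans _ hac); ring
        | apply: (etrans _ had); ring | apply: (etrans _ hbc); ring
        | apply: (etrans _ hbd); ring | apply: (etrans _ hcd); ring ].
have H2 := mulmx1C H.
have E i j : (O *m O^T) i j = (1%:M : 'M[F]_4) i j by rewrite H2.
have E00 := E (@Ordinal 4 0 isT) (@Ordinal 4 0 isT).
have E11 := E (@Ordinal 4 1 isT) (@Ordinal 4 1 isT).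
have E22 := E (@Ordinal 4 2 isT) (@Ordinal 4 2 isT).
have E01 := E (@Ordinal 4 0 isT) (@Ordinal 4 1 isT).
have E12 := E (@Ordinal 4 1 isT) (@Ordinal 4 2 isT).
move: E00 E11 E22 E01 E12; rewrite !mxE !big_ord_recr !big_ord0 /= !mxE /= !add0r.
move=> E00 E11 E22 E01 E12.
split.
- by apply: (etrans _ E00).
- by apply: (etrans _ E11).
- by apply: (etrans _ E22).
- by apply: (etrans _ E01).
- by apply: (etrans _ E12).
Qed.

Local Close Scope ring_scope.
Open Scope R_scope.

Lemma rows_orthR (a1 a2 a3 a4 b1 b2 b3 b4 c1 c2 c3 c4 d1 d2 d3 d4 : R) :
  a1*a1+a2*a2+a3*a3+a4*a4 = 1 ->
  b1*b1+b2*b2+b3*b3+b4*b4 = 1 ->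
  c1*c1+c2*c2+c3*c3+c4*c4 = 1 ->
  d1*d1+d2*d2+d3*d3+d4*d4 = 1 ->
  a1*b1+a2*b2+a3*b3+a4*b4 = 0 ->
  a1*c1+a2*c2+a3*c3+a4*c4 = 0 ->
  a1*d1+a2*d2+a3*d3+a4*d4 = 0 ->
  b1*c1+b2*c2+b3*c3+b4*c4 = 0 ->
  b1*d1+b2*d2+b3*d3+b4*d4 = 0 ->
  c1*d1+c2*d2+c3*d3+c4*d4 = 0 ->
  a1*a1+b1*b1+c1*c1+d1*d1 = 1 /\
  a2*a2+b2*b2+c2*c2+d2*d2 = 1 /\
  a3*a3+b3*b3+c3*c3+d3*d3 = 1 /\
  a1*a2+b1*b2+c1*c2+d1*d2 = 0 /\
  a2*a3+b2*b3+c2*c3+d2*d3 = 0.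
Proof.
  intros h1 h2 h3 h4 h5 h6 h7 h8 h9 h10.
  destruct (@rows_orth R a1 a2 a3 a4 b1 b2 b3 b4 c1 c2 c3 c4 d1 d2 d3 d4
    h1 h2 h3 h4 h5 h6 h7 h8 h9 h10) as [e1 e2 e3 e4 e5].
  repeat split; assumption.
Qed.
Theorem theorem7p1 (A B C D K L M N : pt) :
  convex A B C D ->
  perimeter A B C D = 2 ->
  dual_quadrangle A B C D K L M N ->
  pdist A C = pdist K M /\ pdist B D = pdist L N.
Proof.
  intros _ Hper [u1 [u2 [u3 [u4 [v1 [v2 [v3 [v4 [Hr [Hp [e1 [e2 [e3 e4]]]]]]]]]]]]].
  destruct Hr as [r1 [r2 [r3 [r4 _]]]].
  destruct A as [xA yA], B as [xB yB], C as [xC yC], D as [xD yD].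
  destruct K as [xK yK], L as [xL yL], M as [xM yM], N as [xN yN].
  destruct u1 as [a1 b1], u2 as [a2 b2], u3 as [a3 b3], u4 as [a4 b4].
  destruct v1 as [c1 d1], v2 as [c2 d2], v3 as [c3 d3], v4 as [c4 d4].
  unfold perp_basis, dot4, z1, z2, z3, z4, csq, psub in *; cbn [fst snd] in *.
  pose proof (f_equal fst r1) as r1a; pose proof (f_equal snd r1) as r1b; cbn [fst snd] in r1a, r1b; clear r1. pose proof (f_equal fst r2) as r2a; pose proof (f_equal snd r2) as r2b; cbn [fst snd] in r2a, r2b; clear r2.
  pose proof (f_equal fst r3) as r3a; pose proof (f_equal snd r3) as r3b; cbn [fst snd] in r3a, r3b; clear r3. pose proof (f_equal fst r4) as r4a; pose proof (f_equal snd r4) as r4b; cbn [fst snd] in r4a, r4b; clear r4.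
  pose proof (f_equal fst e1) as e1a; pose proof (f_equal snd e1) as e1b; cbn [fst snd] in e1a, e1b; clear e1. pose proof (f_equal fst e2) as e2a; pose proof (f_equal snd e2) as e2b; cbn [fst snd] in e2a, e2b; clear e2.
  pose proof (f_equal fst e3) as e3a; pose proof (f_equal snd e3) as e3b; cbn [fst snd] in e3a, e3b; clear e3. pose proof (f_equal fst e4) as e4a; pose proof (f_equal snd e4) as e4b; cbn [fst snd] in e4a, e4b; clear e4.
  unfold perimeter, cnorm, z1, z2, z3, z4, psub in Hper; cbn [fst snd] in Hper.
  rewrite <- r1a, <- r1b, <- r2a, <- r2b, <- r3a, <- r3b, <- r4a, <- r4b,
    !sqrt_csq in Hper.
  destruct (colfacts xA yA xB yB xC yC xD yD a1 a2 a3 a4 b1 b2 b3 b4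
    r1a r1b r2a r2b r3a r3b r4a r4b Hper) as [caa [cbb cab]].
  destruct Hp as [hcc [hdd [hcd [hac [had [hbc hbd]]]]]].
  destruct (rows_orthR a1 a2 a3 a4 b1 b2 b3 b4 c1 c2 c3 c4 d1 d2 d3 d4
    caa cbb hcc hdd cab hac had hbc hbd hcd) as [w1 [w2 [w3 [w12 w23]]]].
  unfold pdist, cnorm, psub; cbn [fst snd].
  split.
  - exact (sqrt_eq_diag a1 b1 a2 b2 c1 d1 c2 d2 xA yA xB yB xC yC xK yK xL yL xM yM
      w1 w2 w12 r1a r1b r2a r2b e1a e1b e2a e2b).
  - exact (sqrt_eq_diag a2 b2 a3 b3 c2 d2 c3 d3 xB yB xC yC xD yD xL yL xM yM xN yN
      w2 w3 w23 r2a r2b r3a r3b e2a e2b e3a e3b).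
Qed.
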